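(* Let $q\in(0,1)$ and let $W\in[0,1]^{I\times I}$ be symmetric ($W=W^*$). Consider the Probabilistic Broadcast Gossip Algorithm: at each time $t$, a node $j$ is drawn uniformly at random from $I$; each node $i\ne j$ independently receives $x_j(t)$ with probability $W_{ij}$, and then sets $x_i(t+1)=x_i(t)+q(x_j(t)-x_i(t))$; all other nodes keep $x_k(t+1)=x_k(t)$. The random choices at different times are independent. Writing this as $x(t+1)=x(t)-L(t)x(t)$, one has $\mathbf{1}^*\mathbb{E}[L(t)]=0$ and $$\mathbb{E}[L(t)^*\mathbf{1}\mathbf{1}^*L(t)]\le\gamma\,\mathbb{E}[L(t)+L(t)^*-L(t)^*L(t)]\quad\text{with }\gamma=(W_{\max}+1)\frac{q}{1-q},$$ where $W_{\max}=\max_{i\in I}\sum_{j\in I}W_{ij}$; consequently $\mathbb{E}[(\bar x(t)-\bar x(0))^2]\le\frac{\gamma}{N+\gamma}V(x(0))$ for all $t\ge0$.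
   Context: $I$ is a finite set of $N$ nodes, $x(0)\in\mathbb{R}^I$ deterministic. For the update above, $L(t)$ is the Laplacian of the random weight matrix $a_{ij}(t)$ (where $a_{ij}(t)=q$ if $j$ is the broadcasting node and $i\neq j$ received, and $0$ otherwise for $i\ne j$): $L_{ij}(t)=-a_{ij}(t)$ for $i\ne j$, $L_{ii}(t)=\sum_{j\ne i}a_{ij}(t)$. $\mathbf{1}$ is the all-ones vector, $M^*$ the transpose; $\bar y=\frac1N\sum_i y_i$, $V(y)=\frac1N\sum_i(y_i-\bar y)^2$. For square matrices, $A\le B$ means $A-B$ is negative semidefinite. *)

(* Defs.v *)
From HB Require Import structures.
From mathcomp Require Import all_boot all_order all_algebra.
Set Implicit Arguments. Unset Strict Implicit. Unset Printing Implicit Defensive.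
Import Order.TTheory GRing.Theory Num.Theory.
Local Open Scope ring_scope.

Section PBGA.
Variables (R : realFieldType) (N : nat) (q : R) (W : 'M[R]_N).

(* Probability of the one-step outcome (j, S): node j broadcasts and exactly
   the nodes of S (which must not contain j) receive.  j is uniform, each
   i <> j receives independently with probability W i j. *)
Definition pr (j : 'I_N) (S : {set 'I_N}) : R :=
  if j \in S then 0
  else N%:R^-1 * \prod_(i | i != j) (if i \in S then W i j else 1 - W i j).

Definition step (j : 'I_N) (S : {set 'I_N}) (x : 'cV[R]_N) : 'cV[R]_N :=
  \col_i (if (i \in S) && (i != j) then x i 0 + q * (x j 0 - x i 0) else x i 0).

Definition aw (j : 'I_N) (S : {set 'I_N}) (i k : 'I_N) : R :=
  if (k == j) && (i != j) && (i \in S) then q else 0.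

Definition Lmat (j : 'I_N) (S : {set 'I_N}) : 'M[R]_N :=
  \matrix_(i, k) (if i == k then \sum_(k' | k' != i) aw j S i k' else - aw j S i k).

Definition ExpM (F : 'M[R]_N -> 'M[R]_N) : 'M[R]_N :=
  \sum_j \sum_(S : {set 'I_N}) pr j S *: F (Lmat j S).

(* E[ f(x(t)) ] starting from x(0) = x, with independent steps. *)
Fixpoint Ex (t : nat) (x : 'cV[R]_N) (f : 'cV[R]_N -> R) : R :=
  match t with
  | 0 => f x
  | t'.+1 => \sum_j \sum_(S : {set 'I_N}) pr j S * Ex t' (step j S x) f
  end.

End PBGA.

Definition avg (R : realFieldType) (N : nat) (y : 'cV[R]_N) : R :=
  N%:R^-1 * \sum_i y i 0.

Definition Var (R : realFieldType) (N : nat) (y : 'cV[R]_N) : R :=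
  N%:R^-1 * \sum_i (y i 0 - avg y) ^+ 2.

Definition Wmax (R : realFieldType) (N : nat) (W : 'M[R]_N) : R :=
  \big[Num.max/0]_i \sum_j W i j.

Definition loewner_le (R : realFieldType) (N : nat) (A B : 'M[R]_N) : Prop :=
  forall v : 'cV[R]_N, (v^T *m (A - B) *m v) 0 0 <= 0.

Definition ones (R : realFieldType) (N : nat) : 'cV[R]_N := const_mx 1.

(* Main.v *)
Require Import Defs.
From HB Require Import structures.
From mathcomp Require Import all_boot all_order all_algebra.
Import Order.TTheory GRing.Theory Num.Theory.
Set Implicit Arguments. Unset Strict Implicit. Unset Printing Implicit Defensive.
Local Open Scope ring_scope.

Lemma sum_prod_set (R : comNzRingType) (I : finType) (h : I -> bool -> R) :
  \sum_(S : {set I}) \prod_i h i (i \in S) = \prod_i (h i true + h i false).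
Proof.
have := bigA_distr_bigA h; rewrite /= => E.
transitivity (\prod_i \sum_(b : bool) h i b); last first.
  by apply: eq_bigr => i _; rewrite big_bool.
rewrite E (reindex (fun g : {ffun I -> bool} => [set x | g x])) /=.
  by apply: eq_bigr => g _; apply: eq_bigr => i _; rewrite inE.
exists (fun S : {set I} => [ffun x => x \in S]) => g _.
  by apply/ffunP => x; rewrite ffunE inE.
by apply/setP => x; rewrite inE ffunE.
Qed.
From mathcomp Require Import ring lra.
Section Core.
Variables (R : realFieldType) (N : nat) (q : R) (W : 'M[R]_N).

Definition pp (j i : 'I_N) : R := if i == j then 0 else W i j.
Definition PP j (S : {set 'I_N}) := \prod_l (if l \in S then pp j l else 1 - pp j l).

Lemma prE j S : pr W j S = N%:R^-1 * PP j S.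
Proof.
rewrite /pr /PP [in RHS](bigD1 j) //= /pp eqxx.
case: ifP => hj; first by rewrite mul0r mulr0.
rewrite subr0 mul1r; congr (_ * _); apply: eq_bigr => i hij.
by rewrite (negPf hij).
Qed.

Lemma PP_marg (T : {set 'I_N}) j :
  \sum_S PP j S * \prod_(l in T) (l \in S)%:R = \prod_(l in T) pp j l.
Proof.
pose h l (b : bool) := (if b then pp j l else 1 - pp j l) * (if l \in T then b%:R else 1).
have E : forall S, PP j S * \prod_(l in T) (l \in S)%:R = \prod_l h l (l \in S).
  by move=> S; rewrite /PP /h big_split /= [in X in _ * X = _]big_mkcond.
rewrite (eq_bigr _ (fun S _ => E S)) sum_prod_set [RHS]big_mkcond /=.
apply: eq_bigr => l _; rewrite /h; case: (l \in T) => /=.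
  by rewrite mulr1 mulr0 addr0.
by rewrite !mulr1 addrC subrK.
Qed.

Lemma PP_sum j : \sum_S PP j S = 1.
Proof.
have := PP_marg set0 j; rewrite big_set0 => <-.
by apply: eq_bigr => S _; rewrite big_set0 mulr1.
Qed.

Lemma PP_m1 j i : \sum_S PP j S * (i \in S)%:R = pp j i.
Proof.
have := PP_marg [set i] j; rewrite big_set1 => <-.
by apply: eq_bigr => S _; rewrite big_set1.
Qed.

Lemma PP_m2 j i k : \sum_S PP j S * ((i \in S)%:R * (k \in S)%:R) =
  if i == k then pp j i else pp j i * pp j k.
Proof.
case: eqP => [<-|/eqP hik].
  rewrite -PP_m1; apply: eq_bigr => S _; by case: (i \in S); rewrite ?mulr1 ?mulr0.
have hn : i \notin [set k] by rewrite inE.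
have := PP_marg (i |: [set k]) j; rewrite big_setU1 // big_set1 => <-.
by apply: eq_bigr => S _; rewrite big_setU1 // big_set1.
Qed.

Lemma PP_E1 j (c : 'I_N -> R) :
  \sum_S PP j S * \sum_i (i \in S)%:R * c i = \sum_i c i * pp j i.
Proof.
under eq_bigr do rewrite mulr_sumr.
rewrite exchange_big /=; apply: eq_bigr => i _.
rewrite -PP_m1 mulr_sumr; apply: eq_bigr => S _; ring.
Qed.

Lemma PP_E2 j (c : 'I_N -> R) :
  \sum_S PP j S * (\sum_i (i \in S)%:R * c i) ^+ 2 =
  \sum_i \sum_k c i * c k * (if i == k then pp j i else pp j i * pp j k).
Proof.
have E : forall S, PP j S * (\sum_i (i \in S)%:R * c i) ^+ 2 =
  \sum_i \sum_k PP j S * ((i \in S)%:R * c i * ((k \in S)%:R * c k)).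
  move=> S; rewrite expr2 mulr_suml mulr_sumr; apply: eq_bigr => i _.
  by rewrite mulr_sumr mulr_sumr.
rewrite (eq_bigr _ (fun S _ => E S)) exchange_big /=; apply: eq_bigr => i _.
rewrite exchange_big /=; apply: eq_bigr => k _.
rewrite -PP_m2 mulr_sumr; apply: eq_bigr => S _; ring.
Qed.

End Core.
Lemma dsum_split (R : realFieldType) (I : finType) (X Y Z : I -> I -> R) :
  \sum_i \sum_k (X i k + Y i k - Z i k) =
  \sum_i \sum_k X i k + \sum_i \sum_k Y i k - \sum_i \sum_k Z i k.
Proof.
rewrite -big_split -sumrB /=; apply: eq_bigr => i _.
by rewrite -big_split -sumrB.
Qed.

Lemma CS (R : realFieldType) (I : finType) (p d : I -> R) : (forall i, 0 <= p i) ->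
  (\sum_i p i * d i) ^+ 2 <= (\sum_i p i) * (\sum_i p i * d i ^+ 2).
Proof.
move=> hp.
have key : 2 * ((\sum_i p i) * (\sum_i p i * d i ^+ 2) - (\sum_i p i * d i) ^+ 2)
   = \sum_i \sum_k p i * p k * (d i - d k) ^+ 2.
  have e : forall i k, p i * p k * (d i - d k) ^+ 2 =
     p i * (p k * d k ^+ 2) + p k * (p i * d i ^+ 2) - 2 * ((p i * d i) * (p k * d k)).
    by move=> i k; ring.
  under [RHS]eq_bigr do under eq_bigr do rewrite e.
  rewrite (@dsum_split _ _ (fun i k => p i * (p k * d k ^+ 2)) (fun i k => p k * (p i * d i ^+ 2))
     (fun i k => 2 * ((p i * d i) * (p k * d k)))) /=.
  rewrite [X in _ = _ + X - _]exchange_big /=.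
  have -> : \sum_i \sum_k 2 * ((p i * d i) * (p k * d k)) = 2 * ((\sum_i p i * d i) ^+ 2).
    by rewrite expr2 big_distrlr mulr_sumr; apply: eq_bigr => i _; rewrite mulr_sumr.
  rewrite big_distrlr /=; ring.
have h0 : 0 <= \sum_i \sum_k p i * p k * (d i - d k) ^+ 2.
  apply: sumr_ge0 => i _; apply: sumr_ge0 => k _.
  by rewrite mulr_ge0 ?sqr_ge0 // mulr_ge0.
rewrite -key in h0; lra.
Qed.
Lemma quad_bound (R : realFieldType) (I : finType) (p d : I -> R) (M : R) :
  (forall i, 0 <= p i <= 1) -> \sum_i p i <= M ->
  \sum_i \sum_k d i * d k * (if i == k then p i else p i * p k)
    <= (M + 1) * \sum_i p i * d i ^+ 2.
Proof.
move=> hp hM.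
have hp0 : forall i, 0 <= p i by move=> i; case/andP: (hp i).
have E : \sum_i \sum_k d i * d k * (if i == k then p i else p i * p k) =
   (\sum_i p i * d i) ^+ 2 + \sum_i d i ^+ 2 * (p i - p i ^+ 2).
  rewrite expr2 big_distrlr /= -big_split /=; apply: eq_bigr => i _.
  rewrite (bigD1 i) //= eqxx [X in _ = X + _](bigD1 i) //=.
  have -> : \sum_(k | k != i) d i * d k * (if i == k then p i else p i * p k) =
            \sum_(k | k != i) p i * d i * (p k * d k).
    by apply: eq_bigr => k hk; rewrite eq_sym (negbTE hk); ring.
  ring.
rewrite E.
have h1 := @CS _ _ p d hp0.
have h2 : 0 <= \sum_i p i * d i ^+ 2 by apply: sumr_ge0 => i _; rewrite mulr_ge0 ?sqr_ge0.
have h3 : (\sum_i p i) * (\sum_i p i * d i ^+ 2) <= M * (\sum_i p i * d i ^+ 2).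
  by rewrite ler_wpM2r.
have h4 : \sum_i d i ^+ 2 * (p i - p i ^+ 2) <= \sum_i p i * d i ^+ 2.
  apply: ler_sum => i _.
  have : 0 <= d i ^+ 2 * p i ^+ 2 by rewrite mulr_ge0 ?sqr_ge0.
  set a := d i ^+ 2 * p i ^+ 2 => ha.
  have -> : d i ^+ 2 * (p i - p i ^+ 2) = p i * d i ^+ 2 - a by rewrite /a; ring.
  lra.
lra.
Qed.
Section Main.
Variables (R : realFieldType) (N : nat) (q : R) (W : 'M[R]_N).
Hypothesis hWs : W^T = W.

Lemma Wsym i j : W j i = W i j.
Proof. by have := congr1 (fun M : 'M[R]_N => M i j) hWs; rewrite mxE. Qed.

Lemma sym_swap (F : 'I_N -> 'I_N -> R) :
  \sum_j \sum_i F i j * W i j = \sum_j \sum_i F j i * W i j.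
Proof.
rewrite exchange_big /=; apply: eq_bigr => j _; apply: eq_bigr => i _.
by rewrite Wsym.
Qed.

Lemma antisym (v : 'I_N -> R) : \sum_j \sum_i (v i - v j) * W i j = 0.
Proof.
have := sym_swap (fun i j => v i - v j) => /= E.
have E2 : \sum_j \sum_i (v j - v i) * W i j = - \sum_j \sum_i (v i - v j) * W i j.
  rewrite -sumrN; apply: eq_bigr => j _; rewrite -sumrN; apply: eq_bigr => i _; ring.
rewrite E2 in E; lra.
Qed.

Definition Dsum (v : 'I_N -> R) := \sum_j \sum_i (v i - v j) ^+ 2 * W i j.

Lemma symmetrize (v : 'I_N -> R) :
  \sum_j \sum_i 2 * v i * (v i - v j) * W i j = Dsum v.
Proof.
have := sym_swap (fun i j => v i * (v i - v j)) => /= E.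
have E2 : \sum_j \sum_i 2 * v i * (v i - v j) * W i j =
  \sum_j \sum_i v i * (v i - v j) * W i j + \sum_j \sum_i v i * (v i - v j) * W i j.
  rewrite -big_split /=; apply: eq_bigr => j _; rewrite -big_split /=.
  by apply: eq_bigr => i _; ring.
rewrite E2 [X in _ + X = _]E /Dsum -big_split /=; apply: eq_bigr => j _; rewrite -big_split /=.
by apply: eq_bigr => i _; ring.
Qed.

Lemma prsum j (X : {set 'I_N} -> R) :
  \sum_S pr W j S * X S = N%:R^-1 * \sum_S PP W j S * X S.
Proof. by rewrite mulr_sumr; apply: eq_bigr => S _; rewrite prE mulrA. Qed.

Lemma ppW (v : 'I_N -> R) j i (x : R) :
  (v i - v j) * x * pp W j i = (v i - v j) * x * W i j.
Proof. rewrite /pp; case: eqP => [->|_] /=; [rewrite subrr !mul0r | ] ; by []. Qed.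

Lemma EA (v : 'I_N -> R) :
  \sum_j \sum_S pr W j S * \sum_i (i \in S)%:R * (q * (v i - v j)) = 0.
Proof.
under eq_bigr do rewrite prsum PP_E1.
rewrite -mulr_sumr.
have -> : \sum_j \sum_i q * (v i - v j) * pp W j i = q * \sum_j \sum_i (v i - v j) * W i j.
  rewrite mulr_sumr; apply: eq_bigr => j _; rewrite mulr_sumr; apply: eq_bigr => i _.
  have -> : q * (v i - v j) * pp W j i = (v i - v j) * q * pp W j i by ring.
  by rewrite ppW; ring.
by rewrite antisym !mulr0.
Qed.


Lemma EB (v : 'I_N -> R) (M : R) :
  (forall i j, 0 <= W i j <= 1) -> (forall j, \sum_i W i j <= M) -> 0 < q -> q < 1 ->
  \sum_j \sum_S pr W j S * (\sum_i (i \in S)%:R * (q * (v i - v j))) ^+ 2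
  <= (M + 1) * (q / (1 - q)) *
     \sum_j \sum_S pr W j S * \sum_i (i \in S)%:R *
        (2 * v i * (q * (v i - v j)) - (q * (v i - v j)) ^+ 2).
Proof.
move=> hW hM hq0 hq1.
under eq_bigr do rewrite prsum PP_E2.
under [X in _ <= _ * X]eq_bigr do rewrite prsum PP_E1.
rewrite -!mulr_sumr.
have T1 : \sum_j \sum_i pp W j i * (q * (v i - v j)) ^+ 2 = q ^+ 2 * Dsum v.
  rewrite /Dsum mulr_sumr; apply: eq_bigr => j _; rewrite mulr_sumr; apply: eq_bigr => i _.
  have -> : pp W j i * (q * (v i - v j)) ^+ 2 =
     (v i - v j) * (q ^+ 2 * (v i - v j)) * pp W j i by ring.
  rewrite ppW; ring.
have T2 : \sum_j \sum_i (2 * v i * (q * (v i - v j)) - (q * (v i - v j)) ^+ 2) * pp W j i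
     = (q - q ^+ 2) * Dsum v.
  have -> : \sum_j \sum_i (2 * v i * (q * (v i - v j)) - (q * (v i - v j)) ^+ 2) * pp W j i
     = q * (\sum_j \sum_i 2 * v i * (v i - v j) * W i j) - q ^+ 2 * Dsum v.
    rewrite /Dsum !mulr_sumr -sumrB; apply: eq_bigr => j _.
    rewrite !mulr_sumr -sumrB; apply: eq_bigr => i _.
    have -> : (2 * v i * (q * (v i - v j)) - (q * (v i - v j)) ^+ 2) * pp W j i =
      (v i - v j) * (2 * q * v i - q ^+ 2 * (v i - v j)) * pp W j i by ring.
    rewrite ppW; ring.
  rewrite symmetrize; ring.
have LB : \sum_j \sum_i \sum_k q * (v i - v j) * (q * (v k - v j)) *
      (if i == k then pp W j i else pp W j i * pp W j k) <= (M + 1) * (q ^+ 2 * Dsum v).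
  rewrite -T1 mulr_sumr; apply: ler_sum => j _.
  apply: (@quad_bound _ _ (pp W j) (fun i => q * (v i - v j)) M).
    move=> i; rewrite /pp; case: eqP => _ /=; last exact: hW.
    by rewrite lexx ler01.
  apply: le_trans (hM j); apply: ler_sum => i _; rewrite /pp; case: eqP => _ /=.
    by case/andP: (hW i j).
  by [].
rewrite T2.
have hN0 : 0 <= N%:R^-1 :> R by rewrite invr_ge0 ler0n.
have -> : (M + 1) * (q / (1 - q)) * (N%:R^-1 * ((q - q ^+ 2) * Dsum v)) =
   N%:R^-1 * ((M + 1) * (q ^+ 2 * Dsum v)).
  have h1q : 1 - q != 0 by rewrite subr_eq0 eq_sym lt_eqF.
  set n := N%:R^-1; by field.
by rewrite ler_wpM2l.
Qed.

End Main.
Section Mat.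
Variables (R : realFieldType) (N : nat) (q : R) (W : 'M[R]_N).

Lemma pr_mul j (S : {set 'I_N}) (X Y : R) : (j \notin S -> X = Y) -> pr W j S * X = pr W j S * Y.
Proof.
case: (boolP (j \in S)) => h H; last by rewrite H.
by rewrite /pr h !mul0r.
Qed.

Lemma LmatE j (S : {set 'I_N}) i k : j \notin S ->
  Lmat q j S i k = (i \in S)%:R * (q * ((i == k)%:R - (k == j)%:R)).
Proof.
move=> hj; rewrite /Lmat mxE /aw.
have hij : i \in S -> i != j by move=> hi; apply/eqP => e; rewrite -e hi in hj.
case: (boolP (i \in S)) => hi; last first.
  rewrite mul0r andbF; case: ifP => _; last by rewrite oppr0.
  by rewrite big1 // => k' _; rewrite andbF.
rewrite mul1r (hij hi) /= andbT.
case: eqP => [<-|/eqP ik].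
  rewrite (bigD1 j) /=; last by rewrite eq_sym hij.
  rewrite eqxx big1 ?addr0; last by move=> k' /andP [_ /negbTE ->].
  by rewrite (negbTE (hij hi)) subr0 mulr1.
by rewrite andbT; case: eqP => _ /=; rewrite ?subr0 ?sub0r ?mulrN ?mulr1 ?mulr0 ?oppr0.
Qed.

Lemma sum_delta (x : 'I_N -> R) i : \sum_k (i == k)%:R * x k = x i.
Proof.
rewrite (bigD1 i) //= eqxx mul1r big1 ?addr0 // => k hk.
by rewrite eq_sym (negbTE hk) mul0r.
Qed.

Lemma Lu j (S : {set 'I_N}) (u : 'cV[R]_N) i : j \notin S ->
  (Lmat q j S *m u) i 0 = (i \in S)%:R * (q * (u i 0 - u j 0)).
Proof.
move=> hj; rewrite mxE.
under eq_bigr do rewrite LmatE //.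
have -> : \sum_k (i \in S)%:R * (q * ((i == k)%:R - (k == j)%:R)) * u k 0 =
   (i \in S)%:R * q * (\sum_k (i == k)%:R * u k 0 - \sum_k (j == k)%:R * u k 0).
  rewrite -sumrB mulr_sumr; apply: eq_bigr => k _; rewrite [j == k]eq_sym; ring.
by rewrite !sum_delta mulrA.
Qed.

Lemma dotE (a b : 'cV[R]_N) : (a^T *m b) 0 0 = \sum_i a i 0 * b i 0.
Proof. by rewrite mxE; apply: eq_bigr => i _; rewrite mxE. Qed.

Lemma qf_ExpM (u : 'cV[R]_N) F :
  (u^T *m ExpM q W F *m u) 0 0 =
  \sum_j \sum_S pr W j S * (u^T *m F (Lmat q j S) *m u) 0 0.
Proof.
rewrite /ExpM mulmx_sumr mulmx_suml summxE; apply: eq_bigr => j _.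
rewrite mulmx_sumr mulmx_suml summxE; apply: eq_bigr => S _.
by rewrite -scalemxAr -scalemxAl mxE.
Qed.

End Mat.
Section Mat2.
Variables (R : realFieldType) (N : nat) (q : R) (W : 'M[R]_N).

Lemma entry_ABC (A B C : 'M[R]_(1,1)) : (A + B - C) 0 0 = A 0 0 + B 0 0 - C 0 0.
Proof. by rewrite !mxE. Qed.

Lemma qfA j (S : {set 'I_N}) (u : 'cV[R]_N) : j \notin S ->
  (u^T *m ((Lmat q j S)^T *m ones R N *m (ones R N)^T *m Lmat q j S) *m u) 0 0
  = (\sum_i (i \in S)%:R * (q * (u i 0 - u j 0))) ^+ 2.
Proof.
move=> hj; set L := Lmat q j S.
have -> : u^T *m (L^T *m ones R N *m (ones R N)^T *m L) *m u =
   ((L *m u)^T *m ones R N) *m ((ones R N)^T *m (L *m u)).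
  by rewrite trmx_mul !mulmxA.
rewrite mxE big_ord1 !dotE expr2; congr (_ * _); apply: eq_bigr => i _;
  rewrite /ones ?mxE ?mulr1 ?mul1r -(@Lu _ _ q j S u i hj) [RHS]mxE //.
Qed.

Lemma qfB j (S : {set 'I_N}) (u : 'cV[R]_N) : j \notin S ->
  (u^T *m (Lmat q j S + (Lmat q j S)^T - (Lmat q j S)^T *m Lmat q j S) *m u) 0 0
  = \sum_i (i \in S)%:R * (2 * u i 0 * (q * (u i 0 - u j 0)) - (q * (u i 0 - u j 0)) ^+ 2).
Proof.
move=> hj; set L := Lmat q j S.
rewrite mulmxBr mulmxDr mulmxBl mulmxDl entry_ABC.
have -> : u^T *m L *m u = u^T *m (L *m u) by rewrite mulmxA.
have -> : u^T *m L^T *m u = (L *m u)^T *m u by rewrite trmx_mul.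
have -> : u^T *m (L^T *m L) *m u = (L *m u)^T *m (L *m u) by rewrite trmx_mul !mulmxA.
rewrite !dotE -big_split -sumrB /=; apply: eq_bigr => i _.
rewrite !Lu //; case: (i \in S) => /=; rewrite ?mul1r ?mul0r; ring.
Qed.

End Mat2.
Section Part3.
Variables (R : realFieldType) (N : nat) (q : R) (W : 'M[R]_N).
Hypotheses (hN : (0 < N)%N) (hq0 : 0 < q) (hq1 : q < 1)
  (hW : forall i j, 0 <= W i j <= 1) (hWs : W^T = W).

Definition E1 (x : 'cV[R]_N) (f : 'cV[R]_N -> R) :=
  \sum_j \sum_S pr W j S * f (step q j S x).

Lemma Ex_succ t x f : Ex q W t.+1 x f = Ex q W t x (fun y => E1 y f).
Proof.
elim: t x => [|t IH] x; first by [].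
transitivity (\sum_j \sum_S pr W j S * Ex q W t.+1 (step q j S x) f); first by [].
transitivity (\sum_j \sum_S pr W j S * Ex q W t (step q j S x) (fun y => E1 y f));
  last by [].
by apply: eq_bigr => j _; apply: eq_bigr => S _; rewrite IH.
Qed.

Lemma pr_ge0 j S : 0 <= pr W j S.
Proof.
rewrite /pr; case: ifP => _ //.
rewrite mulr_ge0 ?invr_ge0 ?ler0n //; apply: prodr_ge0 => i _.
by case: ifP => _; case/andP: (hW i j) => ? ?; rewrite ?subr_ge0.
Qed.

Lemma Ex_mono t x f g : (forall y, f y <= g y) -> Ex q W t x f <= Ex q W t x g.
Proof.
move=> H; elim: t x => [|t IH] x /=; first exact: H.
apply: ler_sum => j _; apply: ler_sum => S _.
by rewrite ler_wpM2l ?pr_ge0.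
Qed.

Lemma Ex_scale t x c f : Ex q W t x (fun y => c * f y) = c * Ex q W t x f.
Proof.
elim: t x => [|t IH] x //=.
rewrite mulr_sumr; apply: eq_bigr => j _; rewrite mulr_sumr; apply: eq_bigr => S _.
by rewrite IH; ring.
Qed.

Lemma pr_total : \sum_(j : 'I_N) \sum_(S : {set 'I_N}) pr W j S = 1.
Proof.
have -> : \sum_(j : 'I_N) \sum_(S : {set 'I_N}) pr W j S = \sum_(j : 'I_N) (N%:R^-1 : R).
  apply: eq_bigr => j _.
  have := prsum W j (fun _ => 1); under eq_bigr do rewrite mulr1.
  by move=> ->; under eq_bigr do rewrite mulr1; rewrite PP_sum mulr1.
rewrite sumr_const card_ord -[_ *+ N]mulr_natr mulVf //.
by rewrite pnatr_eq0 -lt0n.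
Qed.

Lemma Wmax_ge j : \sum_i W i j <= Wmax W.
Proof.
have -> : \sum_i W i j = \sum_i W j i by apply: eq_bigr => i _; rewrite Wsym.
exact: (le_bigmax 0 (fun i => \sum_j W i j) j).
Qed.

Lemma Wmax_ge0 : 0 <= Wmax W.
Proof.
apply: le_trans (Wmax_ge (Ordinal hN)).
by apply: sumr_ge0 => i _; case/andP: (hW i (Ordinal hN)).
Qed.


Definition g := (Wmax W + 1) * (q / (1 - q)).

Lemma g_ge0 : 0 <= g.
Proof.
rewrite /g mulr_ge0 // ?divr_ge0 ?subr_ge0 ?ltW //.
by have := Wmax_ge0; lra.
Qed.

Definition phi (c : R) (y : 'cV[R]_N) :=
  (\sum_i (y i 0 - c)) ^+ 2 + g * \sum_i (y i 0 - c) ^+ 2.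

Lemma step_entry j (S : {set 'I_N}) y i : j \notin S ->
  (step q j S y) i 0 = y i 0 - (i \in S)%:R * (q * (y i 0 - y j 0)).
Proof.
move=> hj; rewrite /step mxE.
case: (boolP (i \in S)) => hi /=; last by rewrite mul0r subr0.
have -> : i != j by apply/eqP => e; rewrite -e hi in hj.
rewrite /=; ring.
Qed.

Lemma dlin (w F G H : 'I_N -> {set 'I_N} -> R) (a b c : R) :
  \sum_j \sum_S w j S * (a + b * F j S + G j S - c * H j S) =
  a * (\sum_j \sum_S w j S) + b * (\sum_j \sum_S w j S * F j S)
  + (\sum_j \sum_S w j S * G j S) - c * (\sum_j \sum_S w j S * H j S).
Proof.
rewrite !mulr_sumr -!big_split -sumrB /=; apply: eq_bigr => j _.
rewrite !mulr_sumr -!big_split -sumrB /=; apply: eq_bigr => S _; ring.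
Qed.

Lemma step_phi c y : E1 y (phi c) <= phi c y.
Proof.
pose v := fun i => y i 0 - c.
pose Z := \sum_i v i.
pose D j (S : {set 'I_N}) := \sum_i (i \in S)%:R * (q * (v i - v j)).
pose Q j (S : {set 'I_N}) := \sum_i (i \in S)%:R *
        (2 * v i * (q * (v i - v j)) - (q * (v i - v j)) ^+ 2).
have E : forall j S, pr W j S * phi c (step q j S y) =
   pr W j S * (phi c y + (-2 * Z) * D j S + (D j S) ^+ 2 - g * Q j S).
  move=> j S; apply: pr_mul => hj; rewrite /phi.
  have e1 : \sum_i ((step q j S y) i 0 - c) = Z - D j S.
    rewrite /Z /D -sumrB; apply: eq_bigr => i _; rewrite step_entry // /v; ring.
  have e2 : \sum_i ((step q j S y) i 0 - c) ^+ 2 = \sum_i v i ^+ 2 - Q j S.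
    rewrite /Q -sumrB; apply: eq_bigr => i _; rewrite step_entry // /v.
    by case: (i \in S) => /=; rewrite ?mul1r ?mul0r; ring.
  rewrite e1 e2 /Z /v; ring.
rewrite /E1 (eq_bigr _ (fun j _ => eq_bigr _ (fun S _ => E j S))) dlin pr_total.
have hA : \sum_j \sum_S pr W j S * D j S = 0 by exact: (@EA R N q W hWs v).
have hB := @EB R N q W hWs v (Wmax W) hW Wmax_ge hq0 hq1.
rewrite hA; rewrite -/g in hB.
have : \sum_j \sum_S pr W j S * D j S ^+ 2 <= g * \sum_j \sum_S pr W j S * Q j S by [].
lra.
Qed.

Lemma Ex_phi t c x : Ex q W t x (phi c) <= phi c x.
Proof.
elim: t => [|t IH]; first by []. rewrite Ex_succ.
apply: le_trans IH; apply: Ex_mono => y; exact: step_phi.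
Qed.

End Part3.

Theorem proposition5 (R : realFieldType) (N : nat) (q : R) (W : 'M[R]_N) :
  (0 < N)%N ->
  0 < q -> q < 1 ->
  (forall i j, 0 <= W i j <= 1) ->
  W^T = W ->
  let gamma := (Wmax W + 1) * (q / (1 - q)) in
  ((ones R N)^T *m ExpM q W (fun L => L) = 0)
  /\ loewner_le (ExpM q W (fun L => L^T *m ones R N *m (ones R N)^T *m L))
                (gamma *: ExpM q W (fun L => L + L^T - L^T *m L))
  /\ (forall (x0 : 'cV[R]_N) (t : nat),
        Ex q W t x0 (fun x => (avg x - avg x0) ^+ 2)
          <= gamma / (N%:R + gamma) * Var x0).
Proof.
move=> hN hq0 hq1 hW hWs gamma.
have hg : gamma = g q W by [].
have hg0 : 0 <= gamma by rewrite hg; exact: (@g_ge0 R N q W hN hq0 hq1 hW hWs).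
have hN0 : (N%:R : R) != 0 by rewrite pnatr_eq0 -lt0n.
have hNp : (0 : R) < N%:R by rewrite ltr0n.
split; [|split].
- apply/matrixP => a k; rewrite [RHS]mxE mxE.
  have -> : \sum_i (ones R N)^T a i * ExpM q W (fun L => L) i k =
     \sum_i \sum_j \sum_S pr W j S * Lmat q j S i k.
    apply: eq_bigr => i _; rewrite !mxE mul1r /ExpM summxE.
    by apply: eq_bigr => j _; rewrite summxE; apply: eq_bigr => S _; rewrite mxE.
  rewrite exchange_big /=.
  have -> : \sum_j \sum_i \sum_S pr W j S * Lmat q j S i k =
     \sum_j \sum_S pr W j S * \sum_i (i \in S)%:R * (q * ((fun l => (l == k)%:R : R) i - (fun l => (l == k)%:R : R) j)).
    apply: eq_bigr => j _; rewrite exchange_big /=; apply: eq_bigr => S _.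
    rewrite mulr_sumr; apply: eq_bigr => i _; apply: pr_mul => hj.
    by rewrite LmatE // [k == j]eq_sym.
  exact: (@EA R N q W hWs).
- move=> u; rewrite mulmxBr mulmxBl.
  have -> : forall A B : 'M[R]_(1,1), (A - B) 0 0 = A 0 0 - B 0 0 by move=> A B; rewrite !mxE.
  rewrite -scalemxAr -scalemxAl.
  have -> : forall (a : R) (A : 'M[R]_(1,1)), (a *: A) 0 0 = a * A 0 0.
    by move=> a A; rewrite mxE.
  rewrite !qf_ExpM subr_le0.
  have -> : \sum_j \sum_S pr W j S *
      (u^T *m ((Lmat q j S)^T *m ones R N *m (ones R N)^T *m Lmat q j S) *m u) 0 0
    = \sum_j \sum_S pr W j S * (\sum_i (i \in S)%:R * (q * ((fun l => u l 0) i - (fun l => u l 0) j))) ^+ 2.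
    apply: eq_bigr => j _; apply: eq_bigr => S _; apply: pr_mul => hj.
    by rewrite qfA.
  have -> : \sum_j \sum_S pr W j S *
      (u^T *m (Lmat q j S + (Lmat q j S)^T - (Lmat q j S)^T *m Lmat q j S) *m u) 0 0
    = \sum_j \sum_S pr W j S * \sum_i (i \in S)%:R *
        (2 * (fun l => u l 0) i * (q * ((fun l => u l 0) i - (fun l => u l 0) j))
          - (q * ((fun l => u l 0) i - (fun l => u l 0) j)) ^+ 2).
    apply: eq_bigr => j _; apply: eq_bigr => S _; apply: pr_mul => hj.
    by rewrite qfB.
  rewrite hg /g.
  exact: (@EB R N q W hWs (fun l => u l 0) (Wmax W) hW
            (@Wmax_ge R N W hWs) hq0 hq1).
- move=> x0 t.
  set c := avg x0.
  set k := (N%:R * (N%:R + gamma))^-1.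
  have hNg : N%:R + gamma != 0 by rewrite gt_eqF // ltr_wpDr.
  have hk : 0 <= k by rewrite invr_ge0 mulr_ge0 // ?ler0n // addr_ge0 ?ler0n.
  have eZ : forall y : 'cV[R]_N, \sum_i (y i 0 - c) = \sum_i y i 0 - N%:R * c.
    by move=> y; rewrite sumrB sumr_const card_ord mulr_natl.
  have pt : forall y, (avg y - c) ^+ 2 <= k * phi q W c y.
    move=> y; rewrite /phi -hg.
    have e1 : avg y - c = N%:R^-1 * \sum_i (y i 0 - c).
      by rewrite eZ /avg; field.
    have cs' : (\sum_i (y i 0 - c)) ^+ 2 <= N%:R * \sum_i (y i 0 - c) ^+ 2.
      have := @CS R _ (fun _ => 1) (fun i => y i 0 - c) (fun _ => ler01).
      have -> : \sum_i (fun _ => (1 : R)) i * (fun i => y i 0 - c) i = \sum_i (y i 0 - c).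
        by apply: eq_bigr => i _; rewrite mul1r.
      have -> : \sum_i (fun _ => (1 : R)) i * (fun i => y i 0 - c) i ^+ 2 = \sum_i (y i 0 - c) ^+ 2.
        by apply: eq_bigr => i _; rewrite mul1r.
      by rewrite sumr_const card_ord.
    rewrite e1.
    set Z := \sum_i (y i 0 - c) in cs' *; set s := \sum_i (y i 0 - c) ^+ 2 in cs' *.
    rewrite -subr_ge0.
    have -> : k * (Z ^+ 2 + gamma * s) - (N%:R^-1 * Z) ^+ 2 =
       gamma * (N%:R * s - Z ^+ 2) / (N%:R ^+ 2 * (N%:R + gamma)).
      by rewrite /k; field; rewrite hNg hN0.
    apply: divr_ge0; first by rewrite mulr_ge0 // subr_ge0.
    by rewrite mulr_ge0 // ?sqr_ge0 // addr_ge0 ?ler0n.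
  apply: le_trans (@Ex_mono R N q W hW t x0 _ _ pt) _.
  rewrite (@Ex_scale R N q W t x0 k (phi q W c)).
  apply: le_trans (ler_wpM2l hk (@Ex_phi R N q W hN hq0 hq1 hW hWs t c x0)) _.
  rewrite /phi -hg eZ /c /Var /avg.
  set s := \sum_i _.
  set s2 := \sum_i _.
  rewrite le_eqVlt; apply/orP; left; apply/eqP.
  rewrite /k; field; by rewrite hNg hN0.
Qed.
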